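(* (1) For all $\lambda,\mu\in Y^+$, $(\lambda+\mu)^{++}\le_{Q^\vee}\lambda^{++}+\mu^{++}$. (2) For all $\mu\in Y^+$, $v\in W^v$ and $\nu\in R_v(\mu)$, one has $\nu\in Y^+$ and $\nu^{++}\le_{Q^\vee}\mu^{++}$.
   Context: $I$ finite, $A$ a generalized Cartan matrix, $Y$ a free $\mathbb Z$-module of finite rank with free family $(\alpha_i^\vee)_{i\in I}$ and $\alpha_i\in\mathrm{Hom}(Y,\mathbb Z)$ (free family) with $\alpha_j(\alpha_i^\vee)=a_{i,j}$; $\mathbb A=Y\otimes\mathbb R$; $r_i(v)=v-\alpha_i(v)\alpha_i^\vee$; $W^v=\langle r_i\rangle$; $Q^\vee=\bigoplus\mathbb Z\alpha_i^\vee$, $Q^\vee_+=\bigoplus\mathbb N\alpha_i^\vee$, $x\le_{Q^\vee}y$ iff $y-x\in Q^\vee_+$; $C^v_f=\{\alpha_i>0\ \forall i\}$, $\mathcal T=\bigcup_w w\overline{C^v_f}$, $Y^+=Y\cap\mathcal T$. For $\lambda\in\mathcal T$, $\lambda^{++}$ is the unique element of $W^v\lambda\cap\overline{C^v_f}$. For $E\subset Y$, $R_i(E)=\mathrm{conv}(E\cup r_i(E))\cap(E+Q^\vee)$; $R_w(\lambda)=\bigcup R_{i_1}(\cdots R_{i_k}(\{\lambda\})\cdots)$ over all reduced expressions $w=r_{i_1}\cdots r_{i_k}$. *)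

(* Defs.v *)
(* Y = Z^n (row vectors over int), A = Y (x) R = R^n for an
   arbitrary real field R, index set I = 'I_k. *)
From HB Require Import structures.
From mathcomp Require Import all_boot all_order all_algebra.
Set Implicit Arguments. Unset Strict Implicit. Unset Printing Implicit Defensive.
Import Order.TTheory GRing.Theory Num.Theory.
Local Open Scope ring_scope.

(* canonical pairing Hom(Y,Z) x Y -> Z, Hom(Y,Z) identified with Z^n (dual basis) *)
Definition pairing (n : nat) (a y : 'rV[int]_n) : int := \sum_(j < n) a 0 j * y 0 j.

Definition is_GCM (k : nat) (A : 'M[int]_k) : Prop :=
  (forall i, A i i = 2) /\ (forall i j, i != j -> A i j <= 0) /\
  (forall i j, A i j = 0 <-> A j i = 0).

Definition free_family (k n : nat) (v : 'I_k -> 'rV[int]_n) : Prop :=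
  forall c : 'I_k -> int, \sum_(i < k) c i *: v i = 0 -> forall i, c i = 0.

Section KM.
Variables (R : realFieldType) (n k : nat) (acv alpha : 'I_k -> 'rV[int]_n).

Definition embY (y : 'rV[int]_n) : 'rV[R]_n := map_mx (fun z : int => z%:~R) y.
Definition alphaA (i : 'I_k) (v : 'rV[R]_n) : R := \sum_(j < n) (alpha i 0 j)%:~R * v 0 j.
Definition refl (i : 'I_k) (v : 'rV[R]_n) : 'rV[R]_n := v - alphaA i v *: embY (acv i).
(* the element r_{i1} ... r_{im} of W^v attached to the word [:: i1; ...; im] *)
Definition wact (s : seq 'I_k) (v : 'rV[R]_n) : 'rV[R]_n := foldr refl v s.
Definition domC (v : 'rV[R]_n) : Prop := forall i, 0 <= alphaA i v.
Definition Tits (v : 'rV[R]_n) : Prop := exists s w, domC w /\ v = wact s w.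
Definition Yplus (y : 'rV[int]_n) : Prop := Tits (embY y).
(* u is a (the) element of W^v v /\ closed C^v_f, i.e. u = v^{++} *)
Definition dom_conj (v u : 'rV[R]_n) : Prop := (exists s, u = wact s v) /\ domC u.
Definition leQ (u v : 'rV[R]_n) : Prop :=
  exists c : 'I_k -> nat, v - u = \sum_(i < k) embY (acv i) *+ c i.
Definition inQ (y : 'rV[int]_n) : Prop :=
  exists c : 'I_k -> int, y = \sum_(i < k) c i *: acv i.
Definition conv (S : 'rV[R]_n -> Prop) (x : 'rV[R]_n) : Prop :=
  exists m (p : 'I_m -> 'rV[R]_n) (t : 'I_m -> R),
    (forall j, S (p j)) /\ (forall j, 0 <= t j) /\ \sum_(j < m) t j = 1 /\
    x = \sum_(j < m) t j *: p j.
Definition Ri (i : 'I_k) (E : 'rV[int]_n -> Prop) (y : 'rV[int]_n) : Prop :=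
  conv (fun x => exists e, E e /\ (x = embY e \/ x = refl i (embY e))) (embY y) /\
  (exists e, E e /\ inQ (y - e)).
(* R_{i1}(R_{i2}(... R_{im}(E))) for the word [:: i1; ...; im] *)
Definition Rword (s : seq 'I_k) (E : 'rV[int]_n -> Prop) : 'rV[int]_n -> Prop :=
  foldr Ri E s.
Definition reduced_expr (w s : seq 'I_k) : Prop :=
  (forall v, wact s v = wact w v) /\
  (forall s', (forall v, wact s' v = wact w v) -> (size s <= size s')%N).
(* R_v(lam), v the element of W^v given by the word w *)
Definition Rw (w : seq 'I_k) (lam y : 'rV[int]_n) : Prop :=
  exists s, reduced_expr w s /\ Rword s (fun e => e = lam) y.
End KM.

(* Main.v *)
Require Import Defs.
From HB Require Import structures.
From mathcomp Require Import all_boot all_order all_algebra.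
From mathcomp Require Import ring lra zify.
From Stdlib Require Import Classical_Prop Classical_Pred_Type IndefiniteDescription.
Set Implicit Arguments. Unset Strict Implicit. Unset Printing Implicit Defensive.
Import Order.TTheory GRing.Theory Num.Theory.
Local Open Scope ring_scope.

Section Main.
Variables (R : realFieldType) (k n : nat) (A : 'M[int]_k) (acv alpha : 'I_k -> 'rV[int]_n).
Hypotheses (hA : is_GCM A) (hacv : free_family acv)
  (hpair : forall i j, pairing (alpha j) (acv i) = A i j).

Local Notation ev i := (embY R (acv i)).
Local Notation al := (@alphaA R n k alpha).
Local Notation rf := (@refl R n k acv alpha).
Local Notation wa := (@wact R n k acv alpha).

Lemma alD i u v : al i (u + v) = al i u + al i v.
Proof. by rewrite /alphaA -big_split; apply: eq_bigr => j _; rewrite mxE mulrDr. Qed.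
Lemma alZ i t u : al i (t *: u) = t * al i u.
Proof. by rewrite /alphaA mulr_sumr; apply: eq_bigr => j _; rewrite mxE mulrCA. Qed.
Lemma alN i u : al i (- u) = - al i u.
Proof. by rewrite -scaleN1r alZ mulN1r. Qed.
Lemma alB i u v : al i (u - v) = al i u - al i v.
Proof. by rewrite alD alN. Qed.
Lemma al0 i : al i 0 = 0.
Proof. by rewrite -(scale0r 0) alZ mul0r. Qed.
Lemma al_sum i m (t : 'I_m -> R) (p : 'I_m -> 'rV[R]_n) :
  al i (\sum_(j < m) t j *: p j) = \sum_(j < m) t j * al i (p j).
Proof.
elim/big_rec2: _ => [|j x y _ <-]; first exact: al0.
by rewrite alD alZ.
Qed.

Lemma embYD (a b : 'rV[int]_n) : embY R (a + b) = embY R a + embY R b.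
Proof. by rewrite /embY map_mxD. Qed.
Lemma embYN (a : 'rV[int]_n) : embY R (- a) = - embY R a.
Proof. by rewrite /embY map_mxN. Qed.
Lemma embYB (a b : 'rV[int]_n) : embY R (a - b) = embY R a - embY R b.
Proof. by rewrite embYD embYN. Qed.
Lemma embYZ (m : int) (a : 'rV[int]_n) : embY R (m *: a) = m%:~R *: embY R a.
Proof. by apply/matrixP => x y; rewrite !mxE intrM. Qed.
Lemma embY_sum m (F : 'I_m -> 'rV[int]_n) :
  embY R (\sum_(j < m) F j) = \sum_(j < m) embY R (F j).
Proof.
elim/big_rec2: _ => [|j x y _ <-]; first by apply/matrixP => x y; rewrite !mxE.
by rewrite embYD.
Qed.

Lemma al_embY i (z : 'rV[int]_n) : al i (embY R z) = (pairing (alpha i) z)%:~R.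
Proof.
rewrite /alphaA /pairing rmorph_sum; apply: eq_bigr => j _.
by rewrite mxE rmorphM.
Qed.
Lemma al_ev i j : al i (ev j) = (A j i)%:~R.
Proof. by rewrite al_embY hpair. Qed.

Lemma rfD i u v : rf i (u + v) = rf i u + rf i v.
Proof. by rewrite /refl alD scalerDl opprD addrACA. Qed.
Lemma rfZ i t u : rf i (t *: u) = t *: rf i u.
Proof. by rewrite /refl alZ scalerBr scalerA. Qed.
Lemma rf0 i : rf i 0 = 0.
Proof. by rewrite /refl al0 scale0r subr0. Qed.
Lemma rfK i v : rf i (rf i v) = v.
Proof.
have h2 : al i (ev i) = 2 by rewrite al_ev (proj1 hA).
rewrite /refl alB alZ h2 -addrA -opprD -scalerDl.
have -> : al i v + (al i v - al i v * 2) = 0 by ring.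
by rewrite scale0r oppr0 addr0.
Qed.

Lemma wa_cons i s v : wa (i :: s) v = rf i (wa s v).
Proof. by []. Qed.
Lemma wa_cat s t v : wa (s ++ t) v = wa s (wa t v).
Proof. by rewrite /wact foldr_cat. Qed.
Lemma waD s u v : wa s (u + v) = wa s u + wa s v.
Proof. by elim: s => [//|i s IH]; rewrite !wa_cons IH rfD. Qed.
Lemma waZ s t u : wa s (t *: u) = t *: wa s u.
Proof. by elim: s => [//|i s IH]; rewrite !wa_cons IH rfZ. Qed.
Lemma wa0 s : wa s 0 = 0.
Proof. by elim: s => [//|i s IH]; rewrite wa_cons IH rf0. Qed.
Lemma waN s u : wa s (- u) = - wa s u.
Proof. by rewrite -scaleN1r waZ scaleN1r. Qed.
Lemma waB s u v : wa s (u - v) = wa s u - wa s v.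
Proof. by rewrite waD waN. Qed.
Lemma wa_sum s m (t : 'I_m -> R) (p : 'I_m -> 'rV[R]_n) :
  wa s (\sum_(j < m) t j *: p j) = \sum_(j < m) t j *: wa s (p j).
Proof.
elim/big_rec2: _ => [|j x y _ <-]; first exact: wa0.
by rewrite waD waZ.
Qed.
Lemma wa_rev s v : wa (rev s) (wa s v) = v.
Proof.
elim: s v => [//|i s IH] v.
by rewrite rev_cons -cats1 wa_cat wa_cons /= rfK IH.
Qed.
Lemma wa_revK s v : wa s (wa (rev s) v) = v.
Proof. by rewrite -{1}(revK s) wa_rev. Qed.

Definition equiv (s t : seq 'I_k) := forall v, wa s v = wa t v.

Definition latR (v : 'rV[R]_n) := exists z : 'I_k -> int, v = \sum_i (z i)%:~R *: ev i.
Definition intv (y : 'rV[R]_n) := exists z : 'rV[int]_n, y = embY R z.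
Definition leR (u v : 'rV[R]_n) :=
  exists c : 'I_k -> R, (forall i, 0 <= c i) /\ v - u = \sum_i c i *: ev i.

Lemma lat0 : latR 0.
Proof. by exists (fun _ => 0); rewrite big1 // => i _; rewrite scale0r. Qed.
Lemma latD u v : latR u -> latR v -> latR (u + v).
Proof.
move=> [z ->] [z' ->]; exists (fun i => z i + z' i).
by rewrite -big_split; apply: eq_bigr => i _; rewrite intrD scalerDl.
Qed.
Lemma latN u : latR u -> latR (- u).
Proof.
move=> [z ->]; exists (fun i => - z i).
by rewrite -sumrN; apply: eq_bigr => i _; rewrite intrN scaleNr.
Qed.
Lemma latB u v : latR u -> latR v -> latR (u - v).
Proof. by move=> hu hv; apply: latD => //; apply: latN. Qed.

Lemma rf_intv i y : intv y -> intv (rf i y).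
Proof.
move=> [z ->]; exists (z - (pairing (alpha i) z) *: acv i).
by rewrite embYB embYZ /refl al_embY.
Qed.
Lemma wa_intv s y : intv y -> intv (wa s y).
Proof. by elim: s => [//|i s IH] hy; rewrite wa_cons; apply: rf_intv; apply: IH. Qed.
Lemma rf_lat i y : intv y -> latR (rf i y - y).
Proof.
move=> [z ->]; exists (fun j => if j == i then - pairing (alpha i) z else 0).
rewrite (bigD1 i) //= eqxx big1 ?addr0; last first.
  by move=> j /negbTE ->; rewrite scale0r.
by rewrite /refl al_embY addrAC subrr add0r intrN scaleNr.
Qed.
Lemma wa_lat s y : intv y -> latR (wa s y - y).
Proof.
elim: s => [|i s IH] hy; first by rewrite subrr; apply: lat0.
rewrite wa_cons -(subrK (wa s y) (rf i _)) -addrA.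
apply: latD; last exact: IH.
by apply: rf_lat; apply: wa_intv.
Qed.

Lemma leR_refl u : leR u u.
Proof. exists (fun _ => 0); split=> // ; rewrite subrr big1 // => i _; by rewrite scale0r. Qed.
Lemma leR_trans u v w : leR u v -> leR v w -> leR u w.
Proof.
move=> [c [c0 hc]] [d [d0 hd]]; exists (fun i => c i + d i); split.
  by move=> i; rewrite addr_ge0.
rewrite -(subrK v w) -addrA hd hc addrC -big_split.
by apply: eq_bigr => i _; rewrite scalerDl.
Qed.
Lemma leR_add u v u' v' : leR u v -> leR u' v' -> leR (u + u') (v + v').
Proof.
move=> [c [c0 hc]] [d [d0 hd]]; exists (fun i => c i + d i); split.
  by move=> i; rewrite addr_ge0.
rewrite opprD addrACA hc hd -big_split.
by apply: eq_bigr => i _; rewrite scalerDl.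
Qed.

Definition Mz : 'M[int]_(k, n) := \matrix_(i, j) acv i 0 j.

Lemma freeQ : row_free (map_mx (intr : int -> rat) Mz).
Proof.
apply: inj_row_free => v hv.
pose d : int := \prod_i denq (v 0 i).
pose z i : int := numq (v 0 i) * \prod_(j | j != i) denq (v 0 j).
have hz i : (z i)%:~R = v 0 i * d%:~R.
  rewrite /z /d [in RHS](bigD1 i) //= !intrM numqE; ring.
have hs : \sum_i z i *: acv i = 0.
  apply/matrixP => a b; rewrite [a]ord1 summxE mxE.
  apply/eqP; rewrite -(intr_eq0 rat) rmorph_sum /=.
  have := congr1 (fun m : 'M[rat]_(1,n) => m 0 b) hv; rewrite !mxE => hv'.
  have hv'' : \sum_i v 0 i * (acv i 0 b)%:~R = 0 :> rat.
    by rewrite -[RHS]hv'; apply: eq_bigr => i _; rewrite !mxE.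
  apply/eqP; transitivity ((d%:~R : rat) * \sum_i v 0 i * (acv i 0 b)%:~R).
    by rewrite mulr_sumr; apply: eq_bigr => i _; rewrite mxE rmorphM /= hz; ring.
  by rewrite hv'' mulr0.
have dn0 : (d%:~R : rat) != 0.
  rewrite intr_eq0 /d; apply/prodf_neq0 => i _; exact: denq_neq0.
apply/rowP => i; rewrite mxE.
have := hacv hs i => /(congr1 (fun x : int => x%:~R : rat)); rewrite hz /=.
by move/eqP; rewrite mulf_eq0 (negbTE dn0) orbF => /eqP.
Qed.

Lemma indep (c : 'I_k -> R) : \sum_i c i *: ev i = 0 -> forall i, c i = 0.
Proof.
move=> hc i.
have fR : row_free (map_mx (intr : int -> R) Mz).
  have -> : map_mx (intr : int -> R) Mz = map_mx (ratr : rat -> R) (map_mx intr Mz).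
    by apply/matrixP => a b; rewrite !mxE ratr_int.
  by rewrite row_free_map freeQ.
pose cv : 'rV[R]_k := \row_i c i.
have : cv *m map_mx intr Mz = 0.
  apply/rowP => b; rewrite !mxE.
  have := congr1 (fun m : 'M[R]_(1,n) => m 0 b) hc; rewrite summxE mxE => h; rewrite -[RHS]h.
  by apply: eq_bigr => j _; rewrite !mxE.
move/eqP; rewrite mulmx_free_eq0 // => /eqP /rowP /(_ i).
by rewrite !mxE.
Qed.

Lemma indep2 (c d : 'I_k -> R) :
  \sum_i c i *: ev i = \sum_i d i *: ev i -> forall i, c i = d i.
Proof.
move=> h i; apply/eqP; rewrite -subr_eq0; apply/eqP.
apply: (indep (c := fun i => c i - d i)).
rewrite (eq_bigr (fun i => c i *: ev i - d i *: ev i)); last by move=> j _; rewrite scalerBl.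
by rewrite sumrB h subrr.
Qed.

Lemma toNat u v : leR u v -> latR (v - u) -> leQ acv u v.
Proof.
move=> [c [c0 hc]] [z hz].
have e := indep2 (etrans (esym hc) hz).
exists (fun i => `|z i|%N).
rewrite hc; apply: eq_bigr => i _.
have zi : 0 <= z i by rewrite -(ler0z R) -e.
by rewrite e -scaler_nat -[(`|z i|%N)%:R]/((`|z i|%N)%:~R) (gez0_abs zi).
Qed.

Fixpoint St (b c : R) (s : seq bool) (pq : R * R) : R * R :=
  match s with
  | [::] => pq
  | x :: t => let z := St b c t pq in
      if x then (- z.1, z.2 + c * z.1) else (z.1 + b * z.2, - z.2)
  end.
Fixpoint Dp (b c : R) (s : seq bool) (pq : R * R) : R * R :=
  match s with
  | [::] => (0, 0)
  | x :: t => let z := St b c t pq in let d := Dp b c t pq in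
      if x then (d.1 - z.1, d.2) else (d.1, d.2 - z.2)
  end.
Fixpoint Gc (b c : R) (g : R * R) (s : seq bool) : R * R :=
  match s with
  | [::] => g
  | x :: t => Gc b c (if x then (c * g.2 - g.1, g.2) else (g.1, b * g.1 - g.2)) t
  end.
Fixpoint alt (x : bool) (m : nat) : seq bool :=
  if m is m'.+1 then x :: alt (~~ x) m' else [::].

Lemma St_Gc b c s g pq :
  g.1 * (St b c s pq).1 + g.2 * (St b c s pq).2 = (Gc b c g s).1 * pq.1 + (Gc b c g s).2 * pq.2.
Proof.
elim: s g => [//|x t IH] g /=; rewrite -IH.
by case: x => /=; ring.
Qed.

Lemma size_alt x m : size (alt x m) = m.
Proof. by elim: m x => [//|m IH] x /=; rewrite IH. Qed.

Lemma alt_cat x M r : alt x (M + r) = alt x M ++ alt (if odd M then ~~ x else x) r.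
Proof.
elim: M x => [//|M IH] x /=; rewrite IH; congr (_ :: _ ++ _).
by case: (odd M); case: x.
Qed.

Section Inf.
Variables (b c : R) (hb : 0 <= b) (hc : 0 <= c) (hbc : 4 <= b * c).
Definition InvJ (g : R * R) := [/\ 0 <= g.1, 0 <= g.2, 2 * g.2 <= b * g.1 & c * g.2 <= 2 * g.1].
Definition InvI (g : R * R) := [/\ 0 <= g.1, 0 <= g.2, 2 * g.1 <= c * g.2 & b * g.1 <= 2 * g.2].

Lemma alt_inf m : forall g,
  (InvJ g -> 0 <= (Gc b c g (alt false m)).1 /\ 0 <= (Gc b c g (alt false m)).2) /\
  (InvI g -> 0 <= (Gc b c g (alt true m)).1 /\ 0 <= (Gc b c g (alt true m)).2).
Proof.
elim: m => [|m IH] g; first by split=> -[].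
split=> /= -[h1 h2 h3 h4].
- apply: (proj2 (IH _)); rewrite /InvI /=.
  have e1 : 0 <= (b * c - 4) * g.1 by apply: mulr_ge0 => //; rewrite subr_ge0.
  have e2 := mulr_ge0 hb h1.
  split; nra.
- apply: (proj1 (IH _)); rewrite /InvJ /=.
  have e1 : 0 <= (b * c - 4) * g.2 by apply: mulr_ge0 => //; rewrite subr_ge0.
  have e2 := mulr_ge0 hc h2.
  split; nra.
Qed.
End Inf.

Definition Lt (i j : 'I_k) (x : bool) := if x then i else j.

Lemma al_rf i j x : al j (rf i x) = al j x - al i x * (A i j)%:~R.
Proof. by rewrite /refl alB alZ al_ev. Qed.
Lemma Aii i : A i i = 2.
Proof. by case: hA => h _; rewrite h. Qed.

Lemma i2 : (2 : int)%:~R = 2 :> R. Proof. by []. Qed.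

Lemma state2 i j s y :
  (al i (wa (map (Lt i j) s) y), al j (wa (map (Lt i j) s) y)) =
     St (- A j i)%:~R (- A i j)%:~R s (al i y, al j y) /\
  wa (map (Lt i j) s) y = y + (Dp (- A j i)%:~R (- A i j)%:~R s (al i y, al j y)).1 *: ev i
                            + (Dp (- A j i)%:~R (- A i j)%:~R s (al i y, al j y)).2 *: ev j.
Proof.
elim: s => [|x t [e1 e2]] /=; first by rewrite !scale0r !addr0.
set z := St _ _ t _ in e1 *; set d := Dp _ _ t _ in e2 *.
have hz1 : al i (wa (map (Lt i j) t) y) = z.1 by rewrite -e1.
have hz2 : al j (wa (map (Lt i j) t) y) = z.2 by rewrite -e1.
case: x => /=; rewrite /Lt /=.
- rewrite !al_rf hz1 hz2 Aii; split; first by congr pair; rewrite ?intrN ?i2; ring.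
  by rewrite /refl hz1 e2 scalerBl addrA [RHS]addrAC.
- rewrite !al_rf hz1 hz2 Aii; split; first by congr pair; rewrite ?intrN ?i2; ring.
  by rewrite /refl hz2 e2 scalerBl addrA.
Qed.

Lemma equiv_refl s : equiv s s. Proof. by []. Qed.
Lemma equiv_sym s t : equiv s t -> equiv t s. Proof. by move=> h v; rewrite h. Qed.
Lemma equiv_trans s t u : equiv s t -> equiv t u -> equiv s u.
Proof. by move=> h h' v; rewrite h h'. Qed.
Lemma equiv_cat s s' t t' : equiv s s' -> equiv t t' -> equiv (s ++ t) (s' ++ t').
Proof. by move=> h h' v; rewrite !wa_cat h h'. Qed.
Lemma equiv_cons a s s' : equiv s s' -> equiv (a :: s) (a :: s').
Proof. by move=> h v; rewrite !wa_cons h. Qed.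
Lemma equiv_ii a s : equiv (a :: a :: s) s.
Proof. by move=> v; rewrite !wa_cons rfK. Qed.

Lemma braid_of i j M :
  (forall p q, Dp (- A j i)%:~R (- A i j)%:~R (alt false M) (p, q) =
               Dp (- A j i)%:~R (- A i j)%:~R (alt true M) (p, q)) ->
  equiv (map (Lt i j) (alt false M)) (map (Lt i j) (alt true M)).
Proof.
move=> h y; rewrite (proj2 (state2 _ _ _ _)) (proj2 (state2 _ _ (alt true M) _)).
by rewrite h.
Qed.


Lemma alt_of (u : seq bool) :
  (forall x a z, u <> x ++ a :: a :: z) -> u = alt (head false u) (size u).
Proof.
elim: u => [//|a t IH] h.
case: t IH h => [//|a' t'] IH h.
have a'a : a' = ~~ a.
  by case: a a' h {IH} => -[] // h; exfalso;
    first [exact: (h [::] true t' erefl) | exact: (h [::] false t' erefl)].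
have e : a' :: t' = alt a' (size t').+1.
  by apply: IH => x a0 z e; apply: (h (a :: x) a0 z); rewrite /= e.
by rewrite {1}e /= a'a.
Qed.

Lemma map_ii i j x a z :
  equiv (map (Lt i j) (x ++ a :: a :: z)) (map (Lt i j) (x ++ z)).
Proof. rewrite !map_cat /=; apply: equiv_cat; [exact: equiv_refl | exact: equiv_ii]. Qed.

Lemma lt_braid i j m M :
  equiv (map (Lt i j) (alt false M)) (map (Lt i j) (alt true M)) ->
  (forall t, equiv (map (Lt i j) t) (i :: map (Lt i j) (alt false m)) -> (m <= size t)%N) ->
  (0 < M)%N -> (m < M)%N.
Proof.
case: M => [//|M'] hb h _; rewrite ltnNge; apply/negP => hMm.
set r := alt (if odd M'.+1 then ~~ false else false) (m - M'.+1).
have e : alt false m = alt false M'.+1 ++ r by rewrite -alt_cat subnKC.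
have := h (alt false M' ++ r).
rewrite size_cat size_alt /r size_alt.
have -> : (m <= M' + (m - M'.+1))%N = false by apply/negbTE; rewrite -ltnNge; lia.
move=> H; apply: notF; apply: H.
rewrite e !map_cat; apply: equiv_sym.
apply: equiv_trans (equiv_cons _ (equiv_cat hb (equiv_refl _))) _.
exact: equiv_ii.
Qed.

Lemma fin_case i j m y M :
  (forall p q, Dp (- A j i)%:~R (- A i j)%:~R (alt false M) (p, q) =
               Dp (- A j i)%:~R (- A i j)%:~R (alt true M) (p, q)) ->
  (forall m', (m' < M)%N -> forall p q, 0 <= p -> 0 <= q ->
       0 <= (St (- A j i)%:~R (- A i j)%:~R (alt false m') (p, q)).1) ->
  (forall t, equiv (map (Lt i j) t) (i :: map (Lt i j) (alt false m)) -> (m <= size t)%N) ->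
  (0 < M)%N -> 0 <= al i y -> 0 <= al j y ->
  0 <= (St (- A j i)%:~R (- A i j)%:~R (alt false m) (al i y, al j y)).1.
Proof.
move=> hb hpos h M0 hP hQ; apply: hpos => //.
exact: (lt_braid (braid_of hb) h M0).
Qed.

Lemma InvJ10 b c : 0 <= b -> 0 <= c -> InvJ b c (1, 0).
Proof. by move=> hb hc; rewrite /InvJ /=; split; rewrite ?mulr0 ?mulr1 ?ler01 ?mulr_ge0 ?ler0n. Qed.

Ltac fin_tac M :=
  match goal with eB : _ = _, eC : _ = _ |- _ =>
  apply: (@fin_case _ _ _ _ M) => //; rewrite ?eB ?eC;
  [ move=> p q /=; congr pair; ring
  | do 7 (case; [intros ? p q hp hq; simpl in *; first [nra | discriminate] | ]); by [] ] end.

Lemma R2 i j u y : i != j ->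
  (forall t, equiv (map (Lt i j) t) (map (Lt i j) u) -> (size u <= size t)%N) ->
  (forall t, equiv (map (Lt i j) t) (i :: map (Lt i j) u) -> (size u <= size t)%N) ->
  0 <= al i y -> 0 <= al j y -> 0 <= al i (wa (map (Lt i j) u) y).
Proof.
move=> hij h1 h2 hP hQ.
have na : forall x a z, u <> x ++ a :: a :: z.
  move=> x a z hu; have := h1 (x ++ z).
  rewrite hu !size_cat /=.
  have -> : (size x + (size z).+2 <= size x + size z)%N = false by apply/negbTE; lia.
  move=> H; apply: notF; apply: H; apply: equiv_sym; exact: map_ii.
have hu : u = alt false (size u).
  move: (alt_of na); case: u h1 h2 na => [//|b0 t] h1 h2 na /= ->.
  case: b0 h2 {h1 na} => // h2; exfalso.
  by have := h2 t (equiv_sym (equiv_ii _ _)); rewrite /=; lia.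
have [m hm] : exists m, u = alt false m by exists (size u).
rewrite hm in h2 *; rewrite size_alt in h2.
have [e1 _] := state2 i j (alt false m) y.
have -> : al i (wa (map (Lt i j) (alt false m)) y) =
   (St (- A j i)%:~R (- A i j)%:~R (alt false m) (al i y, al j y)).1 by rewrite -e1.
case: hA => _ [hneg hsym].
have hB : 0 <= - A j i by rewrite oppr_ge0 hneg // eq_sym.
have hC : 0 <= - A i j by rewrite oppr_ge0 hneg.
case: (leP 4 ((- A j i) * (- A i j))) => hbc.
  have := St_Gc (- A j i)%:~R (- A i j)%:~R (alt false m) (1, 0) (al i y, al j y).
  rewrite /= mul1r mul0r addr0 => ->.
  have hb : 0 <= ((- A j i)%:~R : R) by rewrite ler0z.
  have hc : 0 <= ((- A i j)%:~R : R) by rewrite ler0z.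
  have hbc' : 4 <= ((- A j i)%:~R : R) * (- A i j)%:~R.
    have : ((4 : int)%:~R : R) <= ((- A j i) * (- A i j))%:~R by rewrite ler_int.
    by rewrite intrM.
  have [g1 g2] := proj1 (alt_inf hb hc hbc' m (1, 0)) (InvJ10 hb hc).
  by apply: addr_ge0; apply: mulr_ge0.
have [Bn eB] : exists Bn : nat, - A j i = Bn%:Z by exists `|- A j i|%N; rewrite gez0_abs.
have [Cn eC] : exists Cn : nat, - A i j = Cn%:Z by exists `|- A i j|%N; rewrite gez0_abs.
have hz : (Bn == 0)%N = (Cn == 0)%N.
  apply/idP/idP => /eqP h0.
    have e : A i j = 0 by apply/(hsym i j).2; rewrite -[A j i]opprK eB h0.
    by move: eC; rewrite e oppr0; lia.
  have e : A j i = 0 by apply/(hsym i j).1; rewrite -[A i j]opprK eC h0.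
  by move: eB; rewrite e oppr0; lia.
rewrite eB eC in hbc.
move: eB eC hbc hz; case: Bn => [|[|[|[|Bn]]]]; case: Cn => [|[|[|[|Cn]]]] => eB eC hbc hz //;
  try lia; try discriminate.
- fin_tac 2%N.
- fin_tac 3%N.
- fin_tac 4%N.
- fin_tac 6%N.
- fin_tac 4%N.
- fin_tac 6%N.
Qed.

Definition reduced (s : seq 'I_k) := forall t, equiv t s -> (size s <= size t)%N.

Lemma KL nn : forall w i, size w = nn -> reduced w ->
  (forall t, equiv t (i :: w) -> (nn <= size t)%N) ->
  forall x, domC alpha x -> 0 <= al i (wa w x).
Proof.
elim/ltn_ind: nn => nn IH w i hs hred hi x hx.
case: w hs hred hi => [|j w1] hs hred hi; first exact: hx.
have ji : j != i.
  apply/negP => /eqP e; subst j.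
  have := hi w1 (equiv_sym (equiv_ii _ _)); rewrite -hs /=; lia.
suff : forall m ub v, equiv (map (Lt i j) ub ++ v) (j :: w1) ->
    (size ub + size v <= nn)%N -> size v = m -> (m < nn)%N ->
    0 <= al i (wa (j :: w1) x).
  by move=> /(_ (size w1) [:: false] w1 (equiv_refl _)); apply; rewrite -?hs //=.
elim/ltn_ind => m IHm ub v heq hsz hm hmn.
case: (classic (exists t, equiv t v /\ (size t < size v)%N)) => [[t [et st]]|nv].
  apply: (IHm (size t) _ ub t) => //; try lia.
  by apply: equiv_trans heq; apply: equiv_cat => //; exact: equiv_refl.
have hv : reduced v.
  move=> t et; rewrite leqNgt; apply/negP => lt; apply: nv; by exists t.
case: (classic (exists t, equiv t (i :: v) /\ (size t < size v)%N)) => [[t [et st]]|ni].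
  apply: (IHm (size t) _ (ub ++ [:: true]) t) => //; rewrite ?size_cat /=; try lia.
  apply: equiv_trans heq; rewrite map_cat -catA /=.
  apply: equiv_cat; first exact: equiv_refl.
  apply: equiv_trans (equiv_cons _ et) _; exact: equiv_ii.
case: (classic (exists t, equiv t (j :: v) /\ (size t < size v)%N)) => [[t [et st]]|nj].
  apply: (IHm (size t) _ (ub ++ [:: false]) t) => //; rewrite ?size_cat /=; try lia.
  apply: equiv_trans heq; rewrite map_cat -catA /=.
  apply: equiv_cat; first exact: equiv_refl.
  apply: equiv_trans (equiv_cons _ et) _; exact: equiv_ii.
have hiv : forall t, equiv t (i :: v) -> (m <= size t)%N.
  move=> t et; rewrite -hm leqNgt; apply/negP => lt; apply: ni; by exists t.
have hjv : forall t, equiv t (j :: v) -> (m <= size t)%N.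
  move=> t et; rewrite -hm leqNgt; apply/negP => lt; apply: nj; by exists t.
have Pi : forall x', domC alpha x' -> 0 <= al i (wa v x') := IH m hmn v i hm hv hiv.
have Pj : forall x', domC alpha x' -> 0 <= al j (wa v x') := IH m hmn v j hm hv hjv.
rewrite -heq wa_cat.
apply: R2; [by rewrite eq_sym | | | exact: Pi | exact: Pj].
- move=> tb etb; rewrite leqNgt; apply/negP => lt.
  have := hred (map (Lt i j) tb ++ v).
  rewrite size_cat size_map /=; move: hs => /= hs.
  have e2 : equiv (map (Lt i j) tb ++ v) (j :: w1).
    by apply: equiv_trans heq; apply: equiv_cat => //; exact: equiv_refl.
  move=> /(_ e2); lia.
- move=> tb etb; rewrite leqNgt; apply/negP => lt.
  have := hi (map (Lt i j) tb ++ v).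
  rewrite size_cat size_map.
  have e2 : equiv (map (Lt i j) tb ++ v) (i :: j :: w1).
    apply: equiv_trans (equiv_cons i heq).
    by apply: (equiv_cat (t:=v) (t':=v) etb); exact: equiv_refl.
  move=> /(_ e2); lia.
Qed.

Lemma red_suffix a s : reduced (a :: s) -> reduced s.
Proof.
move=> h t et; have := h (a :: t) (equiv_cons a et); rewrite /=; lia.
Qed.

Lemma red_exists s : exists s', equiv s' s /\ reduced s'.
Proof.
have : forall m s, size s = m -> exists s', equiv s' s /\ reduced s'.
  elim/ltn_ind => m IH s0 hs.
  case: (classic (reduced s0)) => [r|nr]; first by exists s0; split => //; exact: equiv_refl.
  have [t ht] : exists t, ~ (equiv t s0 -> (size s0 <= size t)%N) by apply: not_all_ex_not.
  have [et lt] : equiv t s0 /\ (size t < size s0)%N.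
    by split; [apply: NNPP => ne; apply: ht | rewrite ltnNge; apply/negP => le; apply: ht].
  have lt' : (size t < m)%N by rewrite -hs.
  have [s' [e' r']] := IH (size t) lt' t erefl.
  by exists s'; split => //; apply: equiv_trans e' et.
by move=> /(_ (size s) s erefl).
Qed.

Lemma leR_step u x i a : leR u x -> 0 <= a -> leR (u - a *: ev i) x.
Proof.
move=> [c [c0 hc]] ha; exists (fun j => c j + (if j == i then a else 0)); split.
  by move=> j; case: eqP => _; rewrite ?addr0 // addr_ge0.
rewrite opprB addrA addrAC hc.
rewrite [RHS](eq_bigr (fun j => c j *: ev j + (if j == i then a else 0) *: ev j)); last first.
  by move=> j _; rewrite scalerDl.
rewrite big_split /=; congr (_ + _).
rewrite (bigD1 i) //= eqxx big1 ?addr0 // => j /negbTE ->; by rewrite scale0r.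
Qed.

Lemma K x : domC alpha x -> forall s, leR (wa s x) x.
Proof.
move=> hx s; have [s' [e r]] := red_exists s; rewrite -e.
elim: s' r {e} => [|i w IH] r; first exact: leR_refl.
rewrite wa_cons /refl; apply: leR_step; first exact: IH (red_suffix r).
apply: (@KL (size w) w i erefl (red_suffix r)) => // t et.
by have := r t et; rewrite /=; lia.
Qed.

Lemma sum_nat_ev (c : 'I_k -> nat) :
  \sum_i ev i *+ c i = \sum_i ((c i)%:R : R) *: ev i.
Proof. by apply: eq_bigr => i _; rewrite scaler_nat. Qed.

Lemma subr3 (B y z : 'rV[R]_n) : B - z = (B - y) - (z - y).
Proof. by rewrite opprB addrA subrK. Qed.

Lemma subr4 (B y v : 'rV[R]_n) : B - (y - v) = B - y + v.
Proof. by rewrite opprB addrA addrAC. Qed.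

Lemma sum_delta (i : 'I_k) (a : R) : \sum_j (if j == i then a else 0) = a.
Proof. by rewrite (bigD1 i) //= eqxx big1 ?addr0 // => j /negbTE ->. Qed.

Lemma descent B : forall N y, intv y -> (forall u, leR (wa u y) B) -> latR (B - y) ->
  forall c : 'I_k -> nat, B - y = \sum_i ev i *+ c i -> (\sum_i c i)%N = N ->
  exists u, domC alpha (wa u y).
Proof.
elim/ltn_ind => N IH y hy hB hl c hc hN.
case: (classic (domC alpha y)) => [d|nd]; first by exists [::].
have [i hi] : exists i, ~ (0 <= al i y) by apply: not_all_ex_not.
have hneg : al i y < 0 by rewrite ltNge; apply/negP.
pose y' := rf i y.
have hy' : intv y' := rf_intv i hy.
have hB' : forall u, leR (wa u y') B.
  by move=> u; rewrite /y' -[rf i y]/(wa [:: i] y) -wa_cat.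
have e1 : B - y' = (B - y) - (y' - y) by apply: subr3.
have hl' : latR (B - y') by rewrite e1; apply: latB => //; exact: rf_lat.
have [c' hc'] := toNat (hB' [::]) hl'.
have e : forall j, ((c' j)%:R : R) = (c j)%:R + (if j == i then al i y else 0).
  apply: indep2.
  rewrite -sum_nat_ev -hc'.
  rewrite (eq_bigr (fun j => (c j)%:R *: ev j + (if j == i then al i y else 0) *: ev j));
    last by move=> j _; rewrite scalerDl.
  rewrite big_split /= -sum_nat_ev -hc (bigD1 i) //= eqxx big1 ?addr0; last first.
    by move=> j /negbTE ->; rewrite scale0r.
  by change (B - (y - al i y *: ev i) = B - y + al i y *: ev i); apply: subr4.
have lt : (\sum_i c' i < N)%N.
  rewrite -hN -(ltr_nat R) !natr_sum (eq_bigr _ (fun j _ => e j)) big_split /=.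
  by rewrite sum_delta gtrDl.
have [u' hu'] := IH _ lt y' hy' hB' hl' c' hc' erefl.
by exists (u' ++ [:: i]); rewrite wa_cat.
Qed.

Lemma leR_conv m (t : 'I_m -> R) (q : 'I_m -> 'rV[R]_n) B :
  (forall j, 0 <= t j) -> \sum_j t j = 1 -> (forall j, leR (q j) B) ->
  leR (\sum_j t j *: q j) B.
Proof.
move=> t0 t1 hq.
have hc : forall j, {c : 'I_k -> R | (forall i, 0 <= c i) /\ B - q j = \sum_i c i *: ev i}.
  by move=> j; apply: constructive_indefinite_description; exact: hq.
have [C hC] : exists C : 'I_m -> 'I_k -> R,
    forall j, (forall i, 0 <= C j i) /\ B - q j = \sum_i C j i *: ev i.
  by exists (fun j => proj1_sig (hc j)) => j; exact: (proj2_sig (hc j)).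
exists (fun i => \sum_j t j * C j i); split.
  by move=> i; apply: sumr_ge0 => j _; apply: mulr_ge0 => //; case: (hC j) => h _.
have -> : B - \sum_j t j *: q j = \sum_j t j *: (B - q j).
  rewrite [RHS](eq_bigr (fun j => t j *: B - t j *: q j)); last by move=> j _; rewrite scalerBr.
  by rewrite sumrB -scaler_suml t1 scale1r.
rewrite (eq_bigr (fun j => \sum_i (t j * C j i) *: ev i)); last first.
  move=> j _; case: (hC j) => _ ->; rewrite scaler_sumr.
  by apply: eq_bigr => i _; rewrite scalerA.
rewrite exchange_big /=; apply: eq_bigr => i _; by rewrite scaler_suml.
Qed.

Lemma part1 lam mu : Yplus R acv alpha lam -> Yplus R acv alpha mu ->
     Yplus R acv alpha (lam + mu) /\
     (forall a b c : 'rV[R]_n,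
        dom_conj acv alpha (embY R lam) a -> dom_conj acv alpha (embY R mu) b ->
        dom_conj acv alpha (embY R (lam + mu)) c -> leQ acv c (a + b)).
Proof.
move=> [s1 [a1 [d1 e1]]] [s2 [a2 [d2 e2]]].
have il : intv (embY R lam) by exists lam.
have im : intv (embY R mu) by exists mu.
have ey : embY R (lam + mu) = embY R lam + embY R mu := embYD _ _.
have hB : forall u, leR (wa u (embY R (lam + mu))) (a1 + a2).
  by move=> u; rewrite ey waD e1 e2 -!wa_cat; apply: leR_add; exact: K.
have ha1 : a1 = wa (rev s1) (embY R lam) by rewrite e1 wa_rev.
have ha2 : a2 = wa (rev s2) (embY R mu) by rewrite e2 wa_rev.
have hl : latR (a1 + a2 - embY R (lam + mu)).
  have -> : a1 + a2 - embY R (lam + mu) = (a1 - embY R lam) + (a2 - embY R mu).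
    by rewrite ey; apply/rowP => x; rewrite !mxE; ring.
  by apply: latD; [rewrite {1}ha1 | rewrite {1}ha2]; apply: wa_lat.
split.
  have [c hc] := toNat (hB [::]) hl.
  have [u hu] := descent (ltac:(by exists (lam + mu))) hB hl hc erefl.
  by exists (rev u), (wa u (embY R (lam + mu))); split => //; rewrite wa_rev.
move=> a b c [[sa ea] da] [[sb eb] db] [[sc ec] dc].
have hl1 : embY R lam = wa (rev sa) a by rewrite ea wa_rev.
have hm1 : embY R mu = wa (rev sb) b by rewrite eb wa_rev.
apply: toNat.
  rewrite ec ey waD.
  have -> : wa sc (embY R lam) = wa (sc ++ rev sa) a by rewrite wa_cat -hl1.
  have -> : wa sc (embY R mu) = wa (sc ++ rev sb) b by rewrite wa_cat -hm1.
  by apply: leR_add; exact: K.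
have -> : a + b - c = (a - embY R lam) + (b - embY R mu) - (c - embY R (lam + mu)).
  by rewrite ey; apply/rowP => x; rewrite !mxE; ring.
apply: latB; first by apply: latD; [rewrite ea | rewrite eb]; apply: wa_lat.
by rewrite ec; apply: wa_lat; exists (lam + mu).
Qed.

Lemma part2 (mu : 'rV[int]_n) (w : seq 'I_k) (nu : 'rV[int]_n) :
     Yplus R acv alpha mu -> Rw R acv alpha w mu nu ->
     Yplus R acv alpha nu /\
     (forall a b : 'rV[R]_n,
        dom_conj acv alpha (embY R nu) a -> dom_conj acv alpha (embY R mu) b ->
        leQ acv a b).
Proof.
move=> [s0 [b0 [d0 e0]]] [s [_ hR]].
have inv : forall s e, Rword R acv alpha s (fun e => e = mu) e ->
    latR (embY R e - embY R mu) /\ forall u, leR (wa u (embY R e)) b0.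
  elim => [|i s' IH] e /=.
    move=> ->; split; first by rewrite subrr; exact: lat0.
    by move=> u; rewrite e0 -wa_cat; exact: K.
  move=> [hconv [e' [he' hq]]].
  have [l' h'] := IH e' he'.
  split.
    have -> : embY R e - embY R mu = (embY R e - embY R e') + (embY R e' - embY R mu).
      by apply/rowP => x; rewrite !mxE; ring.
    apply: latD => //.
    case: hq => cz hcz; exists cz.
    by rewrite -embYB hcz embY_sum; apply: eq_bigr => j _; rewrite embYZ.
  move=> u; case: hconv => m [p [t [hS [ht [hs1 hx]]]]].
  rewrite hx wa_sum; apply: leR_conv => // j.
  have [e'' [he'' [->| ->]]] := hS j.
    by have [_ h''] := IH e'' he''; apply: h''.
  have [_ h''] := IH e'' he''; rewrite -[rf i _]/(wa [:: i] _) -wa_cat; exact: h''.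
have [lnu hnu] := inv s nu hR.
have hb0 : b0 = wa (rev s0) (embY R mu) by rewrite e0 wa_rev.
have imu : intv (embY R mu) by exists mu.
have inu : intv (embY R nu) by exists nu.
have hl : latR (b0 - embY R nu).
  have -> : b0 - embY R nu = (b0 - embY R mu) - (embY R nu - embY R mu).
    by apply/rowP => x; rewrite !mxE; ring.
  by apply: latB => //; rewrite {1}hb0; apply: wa_lat.
split.
  have [c hc] := toNat (hnu [::]) hl.
  have [u hu] := descent inu hnu hl hc erefl.
  by exists (rev u), (wa u (embY R nu)); split => //; rewrite wa_rev.
move=> a b [[sa ea] da] [[sb eb] db].
have hm1 : embY R mu = wa (rev sb) b by rewrite eb wa_rev.
apply: toNat.
  apply: (@leR_trans _ b0); first by rewrite ea; exact: hnu.
  by rewrite hb0 hm1 -wa_cat; exact: K.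
have -> : b - a = (b - embY R mu) - (a - embY R nu) - (embY R nu - embY R mu).
  by apply/rowP => x; rewrite !mxE; ring.
apply: latB => //; apply: latB; [rewrite eb | rewrite ea]; exact: wa_lat.
Qed.
End Main.

Unset Implicit Arguments.

Theorem mainTheorem8 (R : realFieldType) (k n : nat) (A : 'M[int]_k)
  (acv alpha : 'I_k -> 'rV[int]_n)
  (hA : is_GCM A) (hacv : free_family acv) (halpha : free_family alpha)
  (hpair : forall i j, pairing (alpha j) (acv i) = A i j) :
  (forall lam mu : 'rV[int]_n,
     Yplus R acv alpha lam -> Yplus R acv alpha mu ->
     Yplus R acv alpha (lam + mu) /\
     (forall a b c : 'rV[R]_n,
        dom_conj acv alpha (embY R lam) a -> dom_conj acv alpha (embY R mu) b ->
        dom_conj acv alpha (embY R (lam + mu)) c -> leQ acv c (a + b)))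
  /\
  (forall (mu : 'rV[int]_n) (w : seq 'I_k) (nu : 'rV[int]_n),
     Yplus R acv alpha mu -> Rw R acv alpha w mu nu ->
     Yplus R acv alpha nu /\
     (forall a b : 'rV[R]_n,
        dom_conj acv alpha (embY R nu) a -> dom_conj acv alpha (embY R mu) b ->
        leQ acv a b)).
Proof.
split.
  by move=> lam mu; apply: (part1 hA hacv hpair).
by move=> mu w nu; apply: (part2 hA hacv hpair).
Qed.
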